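(* Let $P$ be a finite $(3+1)$-free poset. For every $P$-tableau $T$ (of any partition shape), $\mathbf u_{\mathrm{colword}(T)}\equiv\mathbf u_{\mathrm{diagword}(T)}\pmod{I^P_{\mathrm{plac}}}$.
   Context: $a<_Pb$: strict order; $a\sim_Pb$: incomparable or equal. $\mathcal{U}_P=\mathbb{Z}\langle u_a:a\in P\rangle$, $\mathbf u_w=u_{w_1}\cdots u_{w_m}$. $I^P_{\mathrm{plac}}$ is generated by $u_bu_au_c-u_bu_cu_a$ ($a<_Pb$, $c\not<_Pb$, $a<_Pc$), $u_cu_au_b-u_au_cu_b$ ($b\not<_Pa$, $b<_Pc$, $a<_Pc$), $u_cu_au_b-u_bu_cu_a$ ($a\sim_Pb$, $b\sim_Pc$, $a<_Pc$). A $P$-tableau is a filling $T$ of a Young diagram (English notation) with $T(1,c)<_PT(2,c)<_P\cdots$ down each column and $T(r,c+1)\not<_PT(r,c)$ along each row. $\mathrm{colword}(T)$ reads each column bottom to top, columns left to right. $\mathrm{diagword}(T)$ reads each diagonal $\{(r,c):c-r=\text{const}\}$ in order of increasing $r$, concatenating diagonals in order of increasing $c-r$. *)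

(* Defs.v *)
From HB Require Import structures.
From mathcomp Require Import all_boot all_order all_algebra.
Set Implicit Arguments. Unset Strict Implicit. Unset Printing Implicit Defensive.
Import Order.TTheory GRing.Theory Num.Theory.
Local Open Scope order_scope.

Section Defs.
Context {d : Order.disp_t} {P : finPOrderType d}.

Definition simP (a b : P) : bool := ~~ (a < b) && ~~ (b < a).

Definition free31 : Prop :=
  ~ exists a b c x : P, [/\ a < b, b < c, ~~ (a >=< x), ~~ (b >=< x) & ~~ (c >=< x)].

(* Elements of U_P = Z<u_a : a in P> are represented as their coefficient
   functions on words (finitely supported in all uses).  mon w = u_w. *)
Definition mon (w : seq P) : seq P -> int := fun v => Posz (v == w).

(* The binomial generators u_l - u_r of I^P_plac, given as pairs (l, r) of words *)
Definition plac_gen (l r : seq P) : Prop :=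
  (exists a b c : P, [/\ a < b, ~~ (c < b), a < c, l = [:: b; a; c] & r = [:: b; c; a]])
  \/ (exists a b c : P, [/\ ~~ (b < a), b < c, a < c, l = [:: c; a; b] & r = [:: a; c; b]])
  \/ (exists a b c : P, [/\ simP a b, simP b c, a < c, l = [:: c; a; b] & r = [:: b; c; a]]).

(* f lies in the two-sided ideal generated by the generators: f is a finite
   Z-linear combination of elements u_x (u_l - u_r) u_y = u_{x l y} - u_{x r y}. *)
Definition in_plac_ideal (f : seq P -> int) : Prop :=
  exists s : seq (int * seq P * (seq P * seq P) * seq P),
    (forall t, t \in s -> plac_gen t.1.2.1 t.1.2.2) /\
    forall v, f v = (\sum_(t <- s)
        t.1.1.1 * (mon (t.1.1.2 ++ t.1.2.1 ++ t.2) v - mon (t.1.1.2 ++ t.1.2.2 ++ t.2) v))%R.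

Definition plac_congr (v w : seq P) : Prop :=
  in_plac_ideal (fun x => (mon v x - mon w x)%R).

(* Tableaux are lists of rows (English notation, row 0 on top).
   Entry T(r,c) = nth (nth [::] T r) c (0-indexed). *)
Definition entry (T : seq (seq P)) (r c : nat) : option P := onth (nth [::] T r) c.

Definition is_Ptableau (T : seq (seq P)) : Prop :=
  [/\ sorted geq (map size T),
      all (fun row => 0 < size row)%N T,
      (forall r c a b, entry T r c = Some a -> entry T r.+1 c = Some b -> a < b)
      & (forall r c a b, entry T r c = Some a -> entry T r c.+1 = Some b -> ~~ (b < a))].

Definition column (T : seq (seq P)) (c : nat) : seq P := pmap (fun row => onth row c) T.

Definition colword (T : seq (seq P)) : seq P :=
  flatten [seq rev (column T c) | c <- iota 0 (size (nth [::] T 0))].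

(* diagonal with c - r = k - size T, read by increasing r *)
Definition diagonal (T : seq (seq P)) (k : nat) : seq P :=
  pmap (fun r => if (size T <= r + k)%N then entry T r (r + k - size T) else None)
       (iota 0 (size T)).

Definition diagword (T : seq (seq P)) : seq P :=
  flatten [seq diagonal T k | k <- iota 0 (size T + size (nth [::] T 0))].

End Defs.

(* Main.v *)
Require Import Defs.
From HB Require Import structures.
From mathcomp Require Import all_boot all_order all_algebra.
From mathcomp Require Import zify ring.
Set Implicit Arguments. Unset Strict Implicit. Unset Printing Implicit Defensive.
Import Order.TTheory GRing.Theory Num.Theory.
Section Pure.
Context {d : Order.disp_t} {P : finPOrderType d}.

Inductive conv : seq P -> seq P -> Prop :=
| conv_refl w : conv w w
| conv_step x y a b c w : (a < b)%O -> ~~ (c < b)%O -> (a < c)%O ->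
    conv (x ++ [:: b; c; a] ++ y) w -> conv (x ++ [:: b; a; c] ++ y) w.

Lemma conv_trans u v w : conv u v -> conv v w -> conv u w.
Proof.
elim=> // x y a b c w' ab cb ac _ IH vw.
exact: conv_step ab cb ac (IH vw).
Qed.

Lemma conv_catl p v w : conv v w -> conv (p ++ v) (p ++ w).
Proof.
elim=> [w'|x y a b c w' ab cb ac _ IH]; first exact: conv_refl.
rewrite (catA p x); apply: (@conv_step (p ++ x) y a b c) ab cb ac _; by rewrite -catA.
Qed.

Lemma conv_catr q v w : conv v w -> conv (v ++ q) (w ++ q).
Proof.
elim=> [w'|x y a b c w' ab cb ac _ IH]; first exact: conv_refl.
rewrite -!catA /=; apply: (@conv_step x (y ++ q) a b c) ab cb ac _; by move: IH; rewrite -!catA.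
Qed.

Lemma conv_plac v w : conv v w -> plac_congr v w.
Proof.
elim=> [w'|x y a b c w' ab cb ac _ [s [Hs Hf]]].
  by exists [::]; split=> // z; rewrite big_nil subrr.
exists (((1%R, x, ([:: b; a; c], [:: b; c; a])), y) :: s); split.
  move=> t; rewrite in_cons => /orP [/eqP -> /=|/Hs //].
  by left; exists a, b, c.
move=> z; rewrite big_cons -Hf /= mul1r.
ring.
Qed.

Definition gtP (a b : P) := (b < a)%O.
Definition nlt (a b : P) := ~~ (b < a)%O.

Lemma move1 A w y : path gtP w A -> (forall x, x \in A -> (x < y)%O) -> ~~ (y < w)%O ->
  conv (w :: A ++ [:: y]) (w :: y :: A).
Proof.
elim: A w => [|x A IH] w /=; first by move=> *; exact: conv_refl.
case/andP=> xw pA Hy yw.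
have xy : (x < y)%O by apply: Hy; rewrite mem_head.
apply: (@conv_trans _ (w :: x :: y :: A)).
  apply: (conv_catl [:: w]); apply: IH => //.
  - by move=> z zA; apply: Hy; rewrite in_cons zA orbT.
  - by rewrite lt_gtF.
exact: (@conv_step [::] A x w y (w :: y :: x :: A) xw yw xy (conv_refl _)).
Qed.

Lemma moveB G w A : path gtP w A -> (forall x y, x \in A -> y \in G -> (x < y)%O) ->
  path nlt w G -> conv (w :: A ++ G) (w :: G ++ A).
Proof.
elim: G w => [|y G IH] w pA H /=; first by move=> _; rewrite cats0; exact: conv_refl.
case/andP=> yw pG.
have HA : forall x, x \in A -> (x < y)%O by move=> x xA; apply: H; rewrite ?mem_head.
apply: (@conv_trans _ (w :: y :: A ++ G)).
  have -> : w :: A ++ y :: G = (w :: A ++ [:: y]) ++ G by rewrite /= -catA.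
  have -> : w :: y :: A ++ G = (w :: y :: A) ++ G by [].
  by apply: conv_catr; apply: move1.
apply: (conv_catl [:: w]); apply: IH => //.
- rewrite path_sortedE; last by move=> p q r pq qr; exact: lt_trans qr pq.
  apply/andP; split; first by apply/allP => x xA; exact: HA.
  exact: path_sorted pA.
- by move=> x z xA zG; apply: H; rewrite // in_cons zG orbT.
Qed.

Definition ocons (o : option P) (s : seq P) := if o is Some x then x :: s else s.

Fixpoint goodo (ps : seq (option P * seq P)) : Prop :=
  match ps with
  | [::] => True
  | (None, G) :: ps' => (G = [::] \/ pmap fst ps' = [::]) /\ goodo ps'
  | (Some x, G) :: ps' => [/\ all (fun x' => (x' < x)%O) (pmap fst ps'),
      (forall x' y, x' \in pmap fst ps' -> y \in G -> (x' < y)%O),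
      pairwise nlt (x :: G) & goodo ps']
  end.

Lemma goodo_sorted ps : goodo ps -> sorted gtP (pmap fst ps).
Proof.
elim: ps => [|[[x|] G] ps IH] //=.
  case=> H1 _ _ /IH H; rewrite path_sortedE ?H1 //.
  by move=> p q r pq qr; exact: lt_trans qr pq.
by case=> _ /IH.
Qed.

Lemma interleave ps : goodo ps ->
  conv (pmap fst ps ++ flatten (map snd ps)) (flatten (map (fun p => ocons p.1 p.2) ps)).
Proof.
elim: ps => [|[[x|] G] ps IH] /=; first by move=> _; exact: conv_refl.
  case=> H1 H2 H3 Hg.
  have Hs := goodo_sorted Hg.
  apply: (@conv_trans _ (x :: G ++ pmap fst ps ++ flatten (map snd ps))).
    rewrite catA -[x :: G ++ _]/((x :: G) ++ _) catA -!cat_cons.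
    apply: conv_catr; apply: moveB => //.
    - by rewrite path_sortedE ?H1 //; move=> p q r pq qr; exact: lt_trans qr pq.
    - by rewrite -(pairwise_cons nlt) in H3; move: (pairwise_sorted H3).
  exact: (conv_catl (x :: G) (IH Hg)).
case=> [[->|E] Hg]; first exact: IH.
rewrite E /=; apply: conv_catl; by move: (IH Hg); rewrite E.
Qed.

End Pure.
Section Tab.
Context {d : Order.disp_t} {P : finPOrderType d}.
Variable (x0 : P) (T : seq (seq P)).
Hypothesis F31 : @free31 d P.
Hypothesis HT : is_Ptableau T.

Let n := size T.
Let m := size (nth [::] T 0).
Definition sz r := size (nth [::] T r).
Definition t r c := nth x0 (nth [::] T r) c.
Definition cell r c := c < sz r.

Lemma entryE r c : entry T r c = if cell r c then Some (t r c) else None.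
Proof.
rewrite /entry /cell /t /sz onthE.
case: ltnP => h; first by rewrite (nth_map x0).
by rewrite nth_default // size_map.
Qed.

Lemma szS r1 r2 : r1 <= r2 -> sz r2 <= sz r1.
Proof.
move=> le12; case: (ltnP r2 n) => h2; last first.
  by rewrite /sz nth_default.
case: HT => Hs _ _ _.
have := sorted_leq_nth (fun b a c (h1 : geq a b) (h2 : geq b c) => leq_trans h2 h1 : geq a c) (@leqnn) 0 Hs.
move=> /(_ r1 r2); rewrite !inE size_map !(nth_map [::]) //; last by lia.
by apply => //; lia.
Qed.

Lemma cellS r c r' c' : cell r c -> r' <= r -> c' <= c -> cell r' c'.
Proof. by rewrite /cell => h rr cc; have := szS rr; lia. Qed.

Lemma cell_n r c : cell r c -> r < n.
Proof. by rewrite /cell /sz; case: (ltnP r n) => // h; rewrite nth_default. Qed.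

Lemma cell_m r c : cell r c -> c < m.
Proof. by move=> h; have := cellS h (leq0n r) (leqnn c). Qed.

Lemma colP r c : cell r.+1 c -> (t r c < t r.+1 c)%O.
Proof.
move=> h; case: HT => _ _ Hc _.
by apply: (Hc r c); rewrite entryE ?h ?(cellS h (leqnSn r) (leqnn c)).
Qed.

Lemma rowP r c : cell r c.+1 -> ~~ (t r c.+1 < t r c)%O.
Proof.
move=> h; case: HT => _ _ _ Hr.
by apply: (Hr r c); rewrite entryE ?h ?(cellS h (leqnn r) (leqnSn c)).
Qed.

Lemma colchain i r c : i < r -> cell r c -> (t i c < t r c)%O.
Proof.
elim: r => // r IH; rewrite ltnS leq_eqVlt => /orP [/eqP -> |ir] h.
  exact: colP.
apply: lt_trans (colP h); apply: IH => //; exact: cellS h (leqnSn r) (leqnn c).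
Qed.

Lemma free_help (a b c y : P) : (a < b)%O -> (b < c)%O -> ~~ (y < c)%O -> (a < y)%O.
Proof.
move=> ab bc yc.
have ac := lt_trans ab bc.
case: (boolP ((a >=< y) || (b >=< y) || (c >=< y))%O) => [|H]; last first.
  exfalso; apply: F31; exists a, b, c, y.
  by move: H; rewrite !negb_or => /andP [/andP [-> ->] ->].
rewrite /Order.comparable.
case/orP=> [/orP [] |] /orP [] h.
- by rewrite lt_neqAle h andbT; apply/eqP => E; rewrite -E ac in yc.
- by rewrite (le_lt_trans h ac) in yc.
- exact: lt_le_trans ab h.
- by rewrite (le_lt_trans h bc) in yc.
- exact: lt_le_trans ac h.
- move: yc; rewrite lt_neqAle h andbT negbK => /eqP E; rewrite E; exact: ac.
Qed.

Lemma Llem dd : forall i j r c, c = j + dd -> cell r c -> i + dd < r -> (t i j < t r c)%O.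
Proof.
elim: dd => [|dd IH] i j r c -> h ir.
  by rewrite addn0 in h *; apply: colchain => //; lia.
case: r ir h => [|r] ir h; first by lia.
have hc : cell r.+1 (j + dd) by apply: cellS h _ _; lia.
apply: (@free_help _ (t r (j + dd)) (t r.+1 (j + dd))).
- apply: IH => //; first by apply: cellS hc _ _; lia.
  lia.
- exact: colP.
- by rewrite addnS; apply: rowP; rewrite -addnS.
Qed.

Lemma Qlem i j r c : cell r c -> i < r -> j <= c -> c + i = r + j -> ~~ (t r c < t i j)%O.
Proof.
move=> h ir jc e.
case: c h jc e => [|c] h jc e; first by lia.
have hc : cell r c by apply: cellS h _ _.
have L : (t i j < t r c)%O.
  apply: (@Llem (c - j)); [lia|exact: hc|lia].
apply/negP => H; have := rowP h; rewrite (lt_trans H L) //.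
Qed.


Lemma pmap_iotaS (f : nat -> option P) a L :
  pmap f (iota a L.+1) = ocons (f a) (pmap f (iota a.+1 L)).
Proof. by rewrite /=; case: (f a). Qed.

Lemma pmap_none (f : nat -> option P) s : (forall r, r \in s -> f r = None) -> pmap f s = [::].
Proof. by elim: s => //= a s IH H; rewrite H ?mem_head //= IH // => r rs; apply: H; rewrite in_cons rs orbT. Qed.

Lemma pmap_split (f g : nat -> option P) r0 a L :
  (forall r, r < r0 -> f r = None) -> (forall r, r < r0 -> g r = None) ->
  (forall r, r0 < r -> f r = g r) -> g r0 = None ->
  pmap f (iota a L) = ocons (if (a <= r0) && (r0 < a + L) then f r0 else None) (pmap g (iota a L)).
Proof.
move=> Hf Hg Hfg g0.
elim: L a => [|L IH] a.
  by rewrite addn0 /=; case: (leqP a r0) => //= h; rewrite ltnNge h.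
rewrite !pmap_iotaS IH.
case: (ltngtP a r0) => h.
- by rewrite Hf // Hg //= addSnnS.
- by rewrite Hfg.
- subst r0; rewrite g0 /=; have -> : a < a + L.+1 by lia.
  by [].
Qed.

Definition e j k := if k <= n + j then entry T (n + j - k) j else None.
Definition dgf j k r := if (n <= r + k) && (j <= r + k - n) then entry T r (r + k - n) else None.
Definition dg j k := pmap (dgf j k) (iota 0 n).
Definition Dj j := flatten [seq dg j k | k <- iota 0 (n + m)].

Lemma entry_big r j : n <= r -> entry T r j = None.
Proof. move=> h; rewrite entryE; case: ifP => // /cell_n; lia. Qed.

Lemma Fact1 j k : dg j k = ocons (e j k) (dg j.+1 k).
Proof.
rewrite /dg /e; case: (leqP k (n + j)) => hk; last first.
  apply: eq_pmap => r; rewrite /dgf; have -> : j < r + k - n by lia.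
  by have -> : j <= r + k - n by lia.
rewrite (@pmap_split _ (dgf j.+1 k) (n + j - k)).
- congr ocons; rewrite leq0n add0n /=; case: ltnP => h.
    have E : n + j - k + k = n + j by lia.
    by rewrite /dgf E addKn leq_addr leqnn.
  by rewrite entry_big.
- by move=> r h; rewrite /dgf; case: ifP => //; lia.
- by move=> r h; rewrite /dgf; case: ifP => //; lia.
- move=> r h; rewrite /dgf; have -> : j < r + k - n by lia.
  by have -> : j <= r + k - n by lia.
- by rewrite /dgf; case: ifP => //; lia.
Qed.


Lemma Dj0 : Dj 0 = diagword T.
Proof.
rewrite /Dj /diagword; congr flatten; apply: eq_map => k.
by apply: eq_pmap => r; rewrite /dgf leq0n andbT.
Qed.

Lemma flatten_nil (A : Type) (f : nat -> seq A) s : (forall k, f k = [::]) -> flatten (map f s) = [::].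
Proof. by move=> H; elim: s => //= k s ->; rewrite H. Qed.

Lemma Djm : Dj m = [::].
Proof.
apply: flatten_nil => k; apply: pmap_none => r _.
rewrite /dgf; case: ifP => // /andP [_ h]; rewrite entryE; case: ifP => // /cell_m; lia.
Qed.

Lemma pmap_map_comp (A : Type) (f : A -> option P) (h : nat -> A) s :
  pmap f (map h s) = pmap (f \o h) s.
Proof. by elim: s => //= a s ->. Qed.

Lemma pmap_fst (e' : nat -> option P) (g : nat -> seq P) s :
  pmap fst [seq (e' k, g k) | k <- s] = pmap e' s.
Proof. by elim: s => //= a s ->. Qed.

Lemma revpart (F : nat -> option P) p L a : a + L <= p.+1 ->
  pmap (fun k => if k <= p then F (p - k) else None) (iota a L) = rev (pmap F (iota (p.+1 - a - L) L)).
Proof.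
elim: L a => [|L IH] a h //.
rewrite pmap_iotaS IH; last by lia.
have -> : a <= p by lia.
have -> : p.+1 - a.+1 - L = p.+1 - a - L.+1 by lia.
rewrite -(addn1 L) iotaD pmap_cat rev_cat /=.
have -> : p.+1 - a - (L + 1) + L = p - a by lia.
by case: (F (p - a)).
Qed.

Lemma ColE j : j < m -> rev (column T j) = pmap (e j) (iota 0 (n + m)).
Proof.
move=> jm.
have -> : column T j = pmap (fun r => entry T r j) (iota 0 n).
  by rewrite /column -{1}(mkseq_nth [::] T) /mkseq pmap_map_comp.
have -> : n + m = (j.+1 + n) + (m - j.+1) by lia.
rewrite !iotaD !pmap_cat.
rewrite (@pmap_none _ (iota 0 j.+1)); last first.
  by move=> k; rewrite mem_iota /e => /andP [_ h]; rewrite ifT ?entry_big //; lia.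
rewrite (@pmap_none _ (iota _ (m - j.+1))); last first.
  by move=> k; rewrite mem_iota /e => /andP [h _]; rewrite ifF //; lia.
rewrite cats0 /= add0n.
have := @revpart (fun r => entry T r j) (n + j) n j.+1.
rewrite /e; move=> ->; last by lia.
by have -> : (n + j).+1 - j.+1 - n = 0 by lia.
Qed.

Lemma goodo_gen (e' : nat -> option P) (g : nat -> seq P) a L :
 (forall k k' x x', k < k' -> e' k = Some x -> e' k' = Some x' -> (x' < x)%O) ->
 (forall k k' x x' y, k < k' -> e' k = Some x -> e' k' = Some x' -> y \in g k -> (x' < y)%O) ->
 (forall k x, e' k = Some x -> pairwise nlt (x :: g k)) ->
 (forall k, e' k = None -> g k = [::] \/ (forall k', k < k' -> e' k' = None)) ->
 goodo [seq (e' k, g k) | k <- iota a L].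
Proof.
move=> U1 U2 U3 U4; elim: L a => [|L IH] a //=.
case E: (e' a) => [x|] /=; rewrite pmap_fst.
  split => //.
  - apply/allP => x'; rewrite mem_pmap => /mapP [k' kin E'].
    by apply: (U1 a k') => //; move: kin; rewrite mem_iota; lia.
  - move=> x' y; rewrite mem_pmap => /mapP [k' kin E'] yg.
    by apply: (U2 a k' x) => //; move: kin; rewrite mem_iota; lia.
  - exact: U3.
split => //; case: (U4 a E) => [->|H]; [by left|right].
by apply: pmap_none => k; rewrite mem_iota => /andP [h _]; apply: H.
Qed.

Lemma pairwise_pmap_iota (R : rel P) (f : nat -> option P) a L :
  (forall r1 r2 y1 y2, r1 < r2 -> f r1 = Some y1 -> f r2 = Some y2 -> R y1 y2) ->
  pairwise R (pmap f (iota a L)).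
Proof.
move=> H; elim: L a => [|L IH] a //; rewrite pmap_iotaS.
case E: (f a) => [y|] /=; last exact: IH.
rewrite IH andbT; apply/allP => z; rewrite mem_pmap => /mapP [r rin E'].
by apply: (H a r) => //; move: rin; rewrite mem_iota; lia.
Qed.

Lemma eSome j k x : e j k = Some x -> [/\ k <= n + j, cell (n + j - k) j & x = t (n + j - k) j].
Proof.
rewrite /e; case: ifP => // h; rewrite entryE; case: ifP => // c [<-]; by split.
Qed.

Lemma dgfP j k r y : dgf j k r = Some y ->
  [/\ n <= r + k, j <= r + k - n, cell r (r + k - n) & y = t r (r + k - n)].
Proof.
rewrite /dgf; case: ifP => // /andP [h1 h2]; rewrite entryE; case: ifP => // c [<-]; by split.
Qed.

Lemma dgmem j k y : y \in dg j k -> exists r,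
  [/\ n <= r + k, j <= r + k - n, cell r (r + k - n) & y = t r (r + k - n)].
Proof. by rewrite mem_pmap => /mapP [r _ /esym /dgfP H]; exists r. Qed.

Lemma Key j : j < m -> conv (rev (column T j) ++ Dj j.+1) (Dj j).
Proof.
move=> jm; rewrite ColE //.
set ps := [seq (e j k, dg j.+1 k) | k <- iota 0 (n + m)].
have -> : pmap (e j) (iota 0 (n + m)) = pmap fst ps by rewrite pmap_fst.
have -> : Dj j.+1 = flatten (map snd ps) by rewrite /Dj -map_comp.
have -> : Dj j = flatten [seq ocons p.1 p.2 | p <- ps].
  by rewrite /Dj -map_comp; congr flatten; apply: eq_map => k; rewrite Fact1.
apply: interleave; apply: goodo_gen.
- move=> k k' x x' kk /eSome [h1 c1 E1] /eSome [h2 c2 E2]; subst x x'.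
  by apply: colchain => //; lia.
- move=> k k' x x' y kk /eSome [h1 c1 E1] /eSome [h2 c2 E2] /dgmem [r [r1 r2 r3 E3]].
  subst x x' y.
  apply: (@Llem (r + k - n - j)) => //; lia.
- move=> k x /eSome [h1 c1 E1]; subst x; rewrite pairwise_cons; apply/andP; split.
    apply/allP => y /dgmem [r [r1 r2 r3 E3]]; subst y; rewrite /nlt.
    by apply: Qlem => //; lia.
  apply: pairwise_pmap_iota => r1 r2 y1 y2 rr /dgfP [a1 a2 a3 E1] /dgfP [b1 b2 b3 E2]; subst y1 y2.
  by rewrite /nlt; apply: Qlem => //; lia.
- move=> k; rewrite /e; case: (leqP k (n + j)) => hk E; last first.
    by right => k' kk; rewrite ifF //; lia.
  left; apply: pmap_none => r _; rewrite /dgf; case: ifP => // /andP [h1 h2].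
  rewrite entryE; case: ifP => // c; move: E; rewrite entryE.
  by rewrite (cellS c (_ : n + j - k <= r) (_ : j <= r + k - n)) //; lia.
Qed.

Lemma main_ind j : j <= m ->
  conv (flatten [seq rev (column T c) | c <- iota 0 j] ++ Dj j) (Dj 0).
Proof.
elim: j => [|j IH] h; first exact: conv_refl.
have -> : iota 0 j.+1 = iota 0 j ++ [:: j] by rewrite -addn1 iotaD.
rewrite map_cat flatten_cat /= cats0 -catA.
apply: conv_trans (IH _); last by lia.
by apply: conv_catl; apply: Key; lia.
Qed.

Lemma tab_conv : conv (colword T) (diagword T).
Proof. by have := main_ind (leqnn m); rewrite Djm cats0 Dj0. Qed.

End Tab.

Theorem mainTheorem17 (d : Order.disp_t) (P : finPOrderType d) :
  @free31 d P ->
  forall T : seq (seq P), is_Ptableau T -> plac_congr (colword T) (diagword T).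
Proof.
move=> F T HT; apply: conv_plac.
case: T HT => [|row T'] HT; first exact: conv_refl.
have := HT; case=> _ /= /andP [rne _] _ _.
case: row rne HT => [//|x0 row] _ HT.
exact: (tab_conv x0 F HT).
Qed.
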